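(* $\mathcal{SED} \cap \mathcal{USAT} \subsetneq \mathcal{VMU}$; moreover every unsatisfiable multi-clause-set $F$ with $\sigma(F) = \delta(F)$ has its underlying clause-set in $\mathcal{VMU}$.
   Context: Literals come with a fixed-point-free involution $x \mapsto \overline{x}$; variables are positive literals. A clause is a finite set $C$ of literals with $C \cap \overline{C} = \emptyset$; a clause-set is a finite set of clauses; a multi-clause-set assigns finitely many clauses a positive multiplicity, and its underlying clause-set is the set of those clauses. $\mathrm{var}(F)$, $n(F) = |\mathrm{var}(F)|$, $c(F)$ the number of clauses counted with multiplicity, $\delta(F) = c(F) - n(F)$. Surplus: $\sigma(F) = \min_{\emptyset \ne V \subseteq \mathrm{var}(F)} (\#\{\text{clauses (with multiplicity) containing a variable of } V\} - |V|)$ for $n(F)>0$, $\sigma(F) = 0$ otherwise. $F$ is satisfiable iff some assignment of truth values makes a literal of every clause true; a multi-clause-set is (un)satisfiable iff its underlying clause-set is. $\mathcal{USAT}$ is the class of unsatisfiable clause-sets; $\mathcal{SED}$ is the class of clause-sets $F$ with $\sigma(F) = \delta(F)$. $\mathcal{VMU}$ is the class of unsatisfiable clause-sets $F$ such that every unsatisfiable $F' \subseteq F$ has $\mathrm{var}(F') = \mathrm{var}(F)$. *)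

(* Defs.v *)
From HB Require Import structures.
From mathcomp Require Import all_boot all_order all_algebra.
From mathcomp Require Import finmap.
Set Implicit Arguments. Unset Strict Implicit. Unset Printing Implicit Defensive.
Import Order.TTheory GRing.Theory Num.Theory.
Local Open Scope fset_scope.

(* Variables are natural numbers; a literal is a pair (v, b): b = true is
   the positive literal v, b = false its complement. *)
Definition lit := (nat * bool)%type.
Definition litvar (l : lit) : nat := l.1.
Definition compl (l : lit) : lit := (l.1, ~~ l.2).

Definition clause_t := {fset lit}.
Definition is_clause (C : clause_t) : bool :=
  [forall l : C, compl (val l) \notin C].

Definition clauseset := {fset clause_t}.
Definition is_clauseset (F : clauseset) : bool := all is_clause F.

(* A multi-clause-set: a finite list of clauses, the multiplicity of a clause
   being its number of occurrences (order is irrelevant). *)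
Definition mclauseset := seq clause_t.
Definition is_mclauseset (F : mclauseset) : bool := all is_clause F.
Definition underlying (F : mclauseset) : clauseset := [fset C | C in F].
Definition as_multi (F : clauseset) : mclauseset := enum_fset F.

Definition varC (C : clause_t) : {fset nat} := [fset litvar l | l in C].
Definition varM (F : mclauseset) : {fset nat} := \bigcup_(C <- F) varC C.
Definition nM (F : mclauseset) : nat := #|` varM F|.
Definition cM (F : mclauseset) : nat := size F.
Definition deltaM (F : mclauseset) : int := (cM F)%:Z - (nM F)%:Z.

Definition occ (F : mclauseset) (V : {fset nat}) : nat :=
  count (fun C => [exists v : V, val v \in varC C]) F.

Definition surplus_vals (F : mclauseset) : seq int :=
  [seq ((occ F V)%:Z - (#|` V|)%:Z)%R | V <- enum_fset (fpowerset (varM F)) & V != fset0].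

(* minimum over nonempty V subset of var(F); 0 if n(F) = 0 *)
Definition surplusM (F : mclauseset) : int :=
  match surplus_vals F with
  | [::] => 0%R
  | x :: s => foldr Order.min x s
  end.

Definition var (F : clauseset) : {fset nat} := varM (as_multi F).
Definition surplus (F : clauseset) : int := surplusM (as_multi F).
Definition delta (F : clauseset) : int := deltaM (as_multi F).

Definition sat_lit (f : nat -> bool) (l : lit) : bool := f l.1 == l.2.
Definition satisfiable (F : clauseset) : Prop :=
  exists f : nat -> bool, forall C, C \in F -> exists2 l, l \in C & sat_lit f l.
Definition msatisfiable (F : mclauseset) : Prop := satisfiable (underlying F).

Definition USAT (F : clauseset) : Prop := is_clauseset F /\ ~ satisfiable F.
Definition SED (F : clauseset) : Prop := is_clauseset F /\ surplus F = delta F.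
Definition VMU (F : clauseset) : Prop :=
  USAT F /\ forall F' : clauseset, F' `<=` F -> ~ satisfiable F' -> var F' = var F.

(* Main.v *)
Require Import Defs.
From HB Require Import structures.
From mathcomp Require Import all_boot all_order all_algebra.
From mathcomp Require Import finmap.
From Stdlib Require Import Classical.
From mathcomp Require Import zify.
Set Implicit Arguments. Unset Strict Implicit.
Local Open Scope fset_scope.

Lemma in_varC x (C : clause_t) : reflect (exists2 l, l \in C & x = l.1) (x \in varC C).
Proof. apply: (iffP idP) => [/imfsetP [l lC ->]|[l lC ->]]; first by exists l. by apply/imfsetP; exists l. Qed.

Lemma in_varM x (s : mclauseset) : reflect (exists2 C, C \in s & x \in varC C) (x \in varM s).
Proof.
apply: (iffP idP) => [/bigfcupP [C /andP[Cs _] xC]|[C Cs xC]]; first by exists C.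
by apply/bigfcupP; exists C; rewrite ?Cs.
Qed.

Definition restr (U : {fset nat}) (C : clause_t) : clause_t :=
  [fset l in C | litvar l \notin U].

Lemma varC_restr U U' C : (varC (restr U C) `<=` U') = (varC C `<=` U `|` U').
Proof.
apply/fsubsetP/fsubsetP => H x.
  move=> /in_varC [l lC ->]; rewrite in_fsetU; case: (boolP (l.1 \in U)) => //= nU.
  apply: H; apply/in_varC; exists l => //; by rewrite /restr !inE lC.
move=> /in_varC [l]; rewrite /restr !inE => /andP[lC nU] ->.
have := H l.1; rewrite in_fsetU (negbTE nU) /=; apply; apply/in_varC; by exists l.
Qed.

Lemma count_split (T : Type) (p q : pred T) s :
  count p s = (count (fun x => p x && q x) s + count (fun x => p x && ~~ q x) s)%N.
Proof. elim: s => //= x s ->; case: (p x); case: (q x) => /=; lia. Qed.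
Definition hallc (G : seq clause_t) := forall U : {fset nat},
  (count (fun C => varC C `<=` U) G <= #|`U|)%N.
Definition satG (f : nat -> bool) (G : seq clause_t) :=
  forall C, C \in G -> exists2 l, l \in C & sat_lit f l.

Lemma cardU_le (A B : {fset nat}) : (#|` A `|` B| <= #|`A| + #|`B|)%N.
Proof. have := cardfsUI A B; lia. Qed.

Lemma hall_sat n : forall G, (size G <= n)%N -> hallc G -> exists f, satG f G.
Proof.
elim: n => [|n IH] G.
  by case: G => // _ _; exists (fun _ => true) => C.
move=> sG hG.
case: (classic (exists U : {fset nat},
  count (fun C => varC C `<=` U) G = #|`U| /\
  (0 < count (fun C => varC C `<=` U) G < size G)%N)).
  move=> [U [tU /andP[lo hi]]].
  set G1 := filter (fun C => varC C `<=` U) G.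
  set G2 := map (restr U) (filter (predC (fun C => varC C `<=` U)) G).
  have cP := count_predC (fun C => varC C `<=` U) G.
  have [f1 s1] : exists f, satG f G1.
    apply: IH; first by rewrite size_filter; lia.
    move=> U'; rewrite count_filter.
    apply: leq_trans (hG U'); apply: sub_count => C /andP[]//.
  have [f2 s2] : exists f, satG f G2.
    apply: IH; first by rewrite size_map size_filter; lia.
    move=> U'; rewrite count_map count_filter.
    have -> : count (predI (preim (restr U) (fun C => varC C `<=` U'))
                  (predC (fun C => varC C `<=` U))) G =
              count (fun C => (varC C `<=` U `|` U') && ~~ (varC C `<=` U)) G.
      by apply: eq_count => C /=; rewrite varC_restr.
    have := count_split (fun C => varC C `<=` U `|` U') (fun C => varC C `<=` U) G.
    have -> : count (fun C => (varC C `<=` U `|` U') && (varC C `<=` U)) G =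
              count (fun C => varC C `<=` U) G.
      apply: eq_count => C /=; case: (boolP (varC C `<=` U)) => h; rewrite ?andbF ?andbT //.
      exact: fsubset_trans h (fsubsetUl _ _).
    have := hG (U `|` U'); have := cardfsUI U U'; lia.
  exists (fun v => if v \in U then f1 v else f2 v) => C CG.
  case: (boolP (varC C `<=` U)) => h.
    have CG1 : C \in G1 by rewrite mem_filter h CG.
    have [l lC sl] := s1 C CG1.
    exists l => //; move: sl; rewrite /sat_lit.
    have -> : l.1 \in U by apply: (fsubsetP h); apply/in_varC; exists l.
    by [].
  have CG2 : C \in filter (predC (fun C => varC C `<=` U)) G by rewrite mem_filter /= h CG.
  have [l lC sl] := s2 (restr U C) (map_f _ CG2).
  move: lC; rewrite /restr !inE => /andP[lC nU]; exists l => //.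
  by move: sl; rewrite /sat_lit; move: nU; rewrite /litvar => /negbTE ->.
move=> hnt.
case: G sG hG hnt => [|C G0] sG hG hnt; first by exists (fun _ => true) => C.
have [l lC _] : exists2 l, l \in C & True.
  have := hG fset0; rewrite cardfs0 /=.
  case: (boolP (varC C `<=` fset0)) => //=; last first.
    rewrite fsubset0 => /fset0Pn [x /in_varC [l lC _]] _; by exists l.
set v := l.1.
have [f0 s0] : exists f, satG f (map (restr [fset v]) G0).
  apply: IH; first by rewrite size_map; move: sG => /=; lia.
  move=> U'; rewrite count_map.
  have -> : count (preim (restr [fset v]) (fun C => varC C `<=` U')) G0 =
            count (fun C => varC C `<=` [fset v] `|` U') G0.
    by apply: eq_count => D /=; rewrite varC_restr.
  set U := [fset v] `|` U'.
  have h1 := hG U.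
  have h2 : ~ (count (fun C => varC C `<=` U) (C :: G0) = #|`U| /\
     (0 < count (fun C => varC C `<=` U) (C :: G0))%N /\
     (count (fun C => varC C `<=` U) (C :: G0) < size (C :: G0))%N).
    by move=> [a [b d]]; apply: hnt; exists U; split => //; rewrite b d.
  have h3 := cardU_le [fset v] U'.
  rewrite cardfs1 in h3.
  have h4 := count_size (fun C => varC C `<=` U) G0.
  move: h1 h2; rewrite /= -/U.
  rewrite -/U in h3; case: (varC C `<=` U) => /=;
  move: h3 h4; set k := count _ G0; set a := #|` U|; set b := #|` U'|; move=> h3 h4; clearbody k a b; lia.
exists (fun x => if x == v then l.2 else f0 x) => D; rewrite inE => /orP[/eqP -> | DG].
  by exists l => //; rewrite /sat_lit /v eqxx.
have [l' lD sl] := s0 (restr [fset v] D) (map_f _ DG).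
move: lD; rewrite /restr !inE => /andP[lD nv]; exists l' => //.
by rewrite /sat_lit (negbTE nv).
Qed.
Import Order.TTheory GRing.Theory Num.Theory.

Lemma foldr_min_le (x : int) s y : y \in x :: s -> (foldr Order.min x s <= y)%O.
Proof.
elim: s y => [|z s IH] y /=; first by rewrite inE => /eqP ->.
rewrite !inE ge_min => /or3P[/eqP->|/eqP->|ys].
- by rewrite (IH _ (mem_head _ _)) orbT.
- by rewrite lexx.
- by rewrite IH ?orbT // inE ys orbT.
Qed.

Lemma surplus_le (F : mclauseset) V : V `<=` varM F -> V != fset0 ->
  (surplusM F <= (occ F V)%:Z - (#|`V|)%:Z)%R.
Proof.
move=> sV nV; rewrite /surplusM.
have : ((occ F V)%:Z - (#|`V|)%:Z)%R \in surplus_vals F.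
  rewrite /surplus_vals; apply: (map_f (fun V => ((occ F V)%:Z - (#|`V|)%:Z)%R)).
  by rewrite mem_filter nV /= fpowersetE.
case: (surplus_vals F) => // x s; exact: foldr_min_le.
Qed.

Lemma key_count (F : mclauseset) U : surplusM F = deltaM F ->
  ~~ (varM F `<=` U) -> (count (fun C => varC C `<=` U) F <= #|`U|)%N.
Proof.
move=> hs nU; set V := varM F `\` U.
have sV : V `<=` varM F by apply: fsubsetDl.
have nV : V != fset0 by rewrite -fsetD_eq0 in nU.
have h1 := surplus_le sV nV; rewrite hs /deltaM /cM /nM in h1.
have h2 : (occ F V + count (fun C => varC C `<=` U) F)%N = size F.
  rewrite -(count_predC (fun C => varC C `<=` U) F) addnC; congr (_ + _)%N.
  apply: eq_in_count => C CF /=; apply/existsP/idP.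
    move=> [[x xV] /= xC]; apply/fsubsetPn; exists x => //.
    by move: xV; rewrite /V in_fsetD => /andP[].
  move=> /fsubsetPn [x xC xU].
  have xV : x \in V by rewrite /V in_fsetD xU /=; apply/in_varM; exists C.
  by exists [` xV].
have h3 := cardfsID U (varM F).
have h4 : (#|` varM F `&` U| <= #|`U|)%N by apply: fsubset_leq_card; apply: fsubsetIr.
rewrite -/V in h3.
move: h1 h2 h3 h4.
set a := occ F V; set b := count _ F; set c := #|` V|; set d := #|` varM F|;
  set e := #|` varM F `&` U|; set g := #|` U|; set sz := size F.
clearbody a b c d e g sz; lia.
Qed.
Lemma count_uniq_sub (T : eqType) (p : pred T) (s1 s2 : seq T) :
  uniq s1 -> {subset s1 <= s2} -> (count p s1 <= count p s2)%N.
Proof.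
move=> u1 sub; rewrite -!size_filter; apply: uniq_leq_size; first exact: filter_uniq.
by move=> x; rewrite !mem_filter => /andP[-> /sub ->].
Qed.

Lemma underlying_as_multi (F : clauseset) : underlying (as_multi F) = F.
Proof.
apply/fsetP => C; apply/imfsetP/idP => [[x xF ->]|CF] //; by exists C.
Qed.

Lemma var_underlying (F : mclauseset) : var (underlying F) = varM F.
Proof.
apply/fsetP => x; apply/in_varM/in_varM => [[C CF xC]|[C CF xC]].
  by move: CF => /imfsetP [D DF eq]; subst; exists D.
by exists C => //; apply/imfsetP; exists C.
Qed.

Lemma part3 (F : mclauseset) : is_mclauseset F -> ~ msatisfiable F ->
     surplusM F = deltaM F -> VMU (underlying F).
Proof.
move=> hF hu hs; split.
  split => //; apply/allP => C /imfsetP [D DF ->]; exact: (allP hF).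
move=> F' sF' uF'; rewrite var_underlying.
set W := var F'.
have sW : W `<=` varM F.
  apply/fsubsetP => x /in_varM [C CF' xC]; apply/in_varM; exists C => //.
  have := fsubsetP sF' C CF' => /imfsetP [D DF ->] //.
case: (eqVneq W (varM F)) => [//|nW]; exfalso.
have nsub : ~~ (varM F `<=` W).
  by apply: contra nW => h; rewrite eqEfsubset sW h.
apply: uF'.
have hh : hallc (enum_fset F').
  move=> U.
  have -> : count (fun C => varC C `<=` U) (enum_fset F') =
            count (fun C => varC C `<=` U `&` W) (enum_fset F').
    apply: eq_in_count => C CF' /=; rewrite fsubsetI.
    have -> : varC C `<=` W; last by rewrite andbT.
    by apply/fsubsetP => x xC; apply/in_varM; exists C.
  have sub : {subset enum_fset F' <= F}.
    move=> C CF'; have := fsubsetP sF' C CF' => /imfsetP [D DF ->] //.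
  apply: leq_trans (@count_uniq_sub _ _ _ F (fset_uniq _) sub) _.
  apply: leq_trans (key_count hs _) _.
    apply: contra nsub => h; exact: fsubset_trans h (fsubsetIr _ _).
  by apply: fsubset_leq_card; apply: fsubsetIl.
have [f sf] := @hall_sat (size (enum_fset F')) (enum_fset F') (leqnn _) hh.
by exists f.
Qed.
Definition F0 : clauseset := [fset (fset0 : clause_t)].

Lemma var_sub0 (G : clauseset) : G `<=` F0 -> var G = fset0.
Proof.
move=> sG; apply/fsetP => x; rewrite in_fset0; apply/negbTE; apply/negP.
move=> /in_varM [C CG /in_varC [l lC _]].
have := fsubsetP sG C CG; rewrite in_fset1 => /eqP Ce.
by rewrite Ce in_fset0 in lC.
Qed.

Lemma F0_VMU : VMU F0.
Proof.
split; last by move=> F' sF' _; rewrite !var_sub0 // fsubset_refl.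
split.
  apply/allP => C; rewrite in_fset1 => /eqP ->.
  apply/forallP => l; have := fsvalP l; by rewrite in_fset0.
move=> [f hf]; have [l] := hf fset0 (fset11 _); by rewrite in_fset0.
Qed.

Lemma F0_notSED : ~ SED F0.
Proof.
move=> [_ hs]; move: hs; rewrite /surplus /delta /surplusM.
have -> : surplus_vals (as_multi F0) = [::].
  rewrite /surplus_vals.
  have -> : varM (as_multi F0) = fset0 by apply: (var_sub0 (fsubset_refl _)).
  rewrite (@eq_in_filter _ _ pred0) ?filter_pred0 //.
  by move=> V; rewrite fpowersetE fsubset0 /= => ->.
rewrite /deltaM /cM /nM.
have -> : varM (as_multi F0) = fset0 by apply: (var_sub0 (fsubset_refl _)).
by rewrite /as_multi cardfs1 cardfs0.
Qed.

Theorem corollary9p6 :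
  ((forall F : clauseset, SED F -> USAT F -> VMU F) /\
   (exists F : clauseset, VMU F /\ ~ (SED F /\ USAT F))) /\
  (forall F : mclauseset, is_mclauseset F -> ~ msatisfiable F ->
     surplusM F = deltaM F -> VMU (underlying F)).
Proof.
split; last exact: part3.
split.
  move=> F [hF hs] [_ hu].
  rewrite -(underlying_as_multi F); apply: part3 => //.
  by rewrite /msatisfiable underlying_as_multi.
by exists F0; split; [exact: F0_VMU | move=> [h _]; exact: F0_notSED h].
Qed.
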